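(* Let $C_1 \subseteq \mathbb{R}^2$ be convex, let $\mathbf{t} \in \mathbb{R}^2$ be a nonzero vector, and let $C_2 = C_1 + \mathbf{t} = \{x + \mathbf{t} : x \in C_1\}$. Choose Cartesian coordinates whose positive $x$-axis points in the direction of $\mathbf{t}$. If $p \in C_1 \setminus C_2$ and $q \in C_2$ have the same $y$-coordinate, then the $x$-coordinate of $p$ is strictly smaller than that of $q$. Similarly, if $p \in C_2 \setminus C_1$ and $q \in C_1$ have the same $y$-coordinate, then the $x$-coordinate of $p$ is strictly larger than that of $q$. *)

(* Defs.v *)
From mathcomp Require Import all_boot all_order all_algebra.
From mathcomp Require Import reals.
Set Implicit Arguments. Unset Strict Implicit. Unset Printing Implicit Defensive.
Import Order.TTheory GRing.Theory Num.Theory.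
Local Open Scope ring_scope.

Definition convex2 {R : realType} (C : R * R -> Prop) : Prop :=
  forall x y : R * R, C x -> C y -> forall l : R, 0 <= l -> l <= 1 ->
    C (l * x.1 + (1 - l) * y.1, l * x.2 + (1 - l) * y.2).

Definition translate2 {R : realType} (C : R * R -> Prop) (t : R * R) : R * R -> Prop :=
  fun z => exists x, C x /\ z = (x.1 + t.1, x.2 + t.2).

Definition norm2 {R : realType} (t : R * R) : R := Num.sqrt (t.1 ^+ 2 + t.2 ^+ 2).

(* Cartesian (orthonormal) coordinates whose positive x-axis points in the
   direction of t (t <> 0), with the y-axis obtained by rotating by +90 degrees. *)
Definition xcoord {R : realType} (t p : R * R) : R :=
  (p.1 * t.1 + p.2 * t.2) / norm2 t.
Definition ycoord {R : realType} (t p : R * R) : R :=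
  (t.1 * p.2 - t.2 * p.1) / norm2 t.

(* Main.v *)
Require Import Defs.
From mathcomp Require Import all_boot all_order all_algebra.
From mathcomp Require Import reals.
From mathcomp Require Import ring lra.
Import Order.TTheory GRing.Theory Num.Theory.
Local Open Scope ring_scope.

Lemma key_id (R : realType) (t1 t2 p1 p2 q1 q2 : R) :
  t1 * p2 - t2 * p1 = t1 * q2 - t2 * q1 ->
  (t1^+2 + t2^+2) * (q1 - p1) = ((q1 - p1) * t1 + (q2 - p2) * t2) * t1 /\
  (t1^+2 + t2^+2) * (q2 - p2) = ((q1 - p1) * t1 + (q2 - p2) * t2) * t2.
Proof.
move=> H.
have E : t2 * (q1 - p1) - t1 * (q2 - p2) = 0.
  have -> : t2 * (q1 - p1) - t1 * (q2 - p2) = (t1 * p2 - t2 * p1) - (t1 * q2 - t2 * q1) by ring.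
  by rewrite H subrr.
split; apply/eqP; rewrite -subr_eq0; apply/eqP.
  have -> : (t1^+2 + t2^+2) * (q1 - p1) - ((q1 - p1) * t1 + (q2 - p2) * t2) * t1
    = t2 * (t2 * (q1 - p1) - t1 * (q2 - p2)) by ring.
  by rewrite E mulr0.
have -> : (t1^+2 + t2^+2) * (q2 - p2) - ((q1 - p1) * t1 + (q2 - p2) * t2) * t2
    = - t1 * (t2 * (q1 - p1) - t1 * (q2 - p2)) by ring.
by rewrite E mulr0.
Qed.

Theorem mainTheorem3 (R : realType) (C1 : R * R -> Prop) (t : R * R) :
  convex2 C1 -> t <> (0, 0) ->
  (forall p q : R * R,
     C1 p -> ~ translate2 C1 t p -> translate2 C1 t q ->
     ycoord t p = ycoord t q -> xcoord t p < xcoord t q) /\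
  (forall p q : R * R,
     translate2 C1 t p -> ~ C1 p -> C1 q ->
     ycoord t p = ycoord t q -> xcoord t p > xcoord t q).
Proof.
case: t => t1 t2 Hc Ht.
have Kp : 0 < t1^+2 + t2^+2.
  rewrite lt0r addr_ge0 ?sqr_ge0 // andbT paddr_eq0 ?sqr_ge0 // !sqrf_eq0.
  by apply/negP => /andP [/eqP h1 /eqP h2]; apply: Ht; rewrite h1 h2.
set K := t1^+2 + t2^+2 in Kp.
have Np : 0 < norm2 (t1, t2) by rewrite /norm2 /= sqrtr_gt0.
have Ni : 0 < (norm2 (t1, t2))^-1 by rewrite invr_gt0.
have Yeq : forall p1 p2 q1 q2 : R, ycoord (t1,t2) (p1,p2) = ycoord (t1,t2) (q1,q2) ->
    t1 * p2 - t2 * p1 = t1 * q2 - t2 * q1.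
  move=> p1 p2 q1 q2; rewrite /ycoord /=.
  by apply: (mulIf (lt0r_neq0 Ni)).
split.
- case=> p1 p2 [q1 q2] Cp Ntp [[x1 x2] [Cx /= [e1 e2]]] Hy.
  have [Ka Kb] := @key_id R _ _ _ _ _ _ (Yeq _ _ _ _ Hy).
  rewrite ltNge; apply/negP => Hle.
  set D := (q1 - p1) * t1 + (q2 - p2) * t2 in Ka Kb.
  have HD : D <= 0.
    move: Hle; rewrite /xcoord /= ler_pM2r // => Hle.
    rewrite /D; lra.
  have KD : 0 < K - D by lra.
  apply: Ntp; exists (p1 - t1, p2 - t2); split; last by rewrite /= !subrK.
  have := Hc (p1, p2) (x1, x2) Cp Cx (- D / (K - D)).
  have -> : - D / (K - D) * (p1, p2).1 + (1 - - D / (K - D)) * (x1, x2).1 = p1 - t1.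
    apply/eqP; rewrite -subr_eq0; apply/eqP.
    have -> : - D / (K - D) * (p1, p2).1 + (1 - - D / (K - D)) * (x1, x2).1 - (p1 - t1)
       = (K * (q1 - p1) - D * t1) / (K - D).
      by rewrite /= e1; field; rewrite lt0r_neq0.
    by rewrite Ka subrr mul0r.
  have -> : - D / (K - D) * (p1, p2).2 + (1 - - D / (K - D)) * (x1, x2).2 = p2 - t2.
    apply/eqP; rewrite -subr_eq0; apply/eqP.
    have -> : - D / (K - D) * (p1, p2).2 + (1 - - D / (K - D)) * (x1, x2).2 - (p2 - t2)
       = (K * (q2 - p2) - D * t2) / (K - D).
      by rewrite /= e2; field; rewrite lt0r_neq0.
    by rewrite Kb subrr mul0r.
  apply.
    by apply: divr_ge0; [rewrite oppr_ge0 | exact: ltW].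
  by rewrite ler_pdivrMr // mul1r; lra.
- case=> p1 p2 [q1 q2] [[x1 x2] [Cx /= [e1 e2]]] NCp Cq Hy.
  have [Ka Kb] := @key_id R _ _ _ _ _ _ (Yeq _ _ _ _ Hy).
  rewrite ltNge; apply/negP => Hle.
  set D := (q1 - p1) * t1 + (q2 - p2) * t2 in Ka Kb.
  have HD : 0 <= D.
    move: Hle; rewrite /xcoord /= ler_pM2r // => Hle.
    rewrite /D; lra.
  have KD : 0 < K + D by lra.
  apply: NCp.
  have := Hc (q1, q2) (x1, x2) Cq Cx (K / (K + D)).
  have -> : K / (K + D) * (q1, q2).1 + (1 - K / (K + D)) * (x1, x2).1 = p1.
    apply/eqP; rewrite -subr_eq0; apply/eqP.
    have -> : K / (K + D) * (q1, q2).1 + (1 - K / (K + D)) * (x1, x2).1 - p1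
       = (K * (q1 - p1) - D * t1) / (K + D).
      by rewrite /= e1; field; rewrite lt0r_neq0.
    by rewrite Ka subrr mul0r.
  have -> : K / (K + D) * (q1, q2).2 + (1 - K / (K + D)) * (x1, x2).2 = p2.
    apply/eqP; rewrite -subr_eq0; apply/eqP.
    have -> : K / (K + D) * (q1, q2).2 + (1 - K / (K + D)) * (x1, x2).2 - p2
       = (K * (q2 - p2) - D * t2) / (K + D).
      by rewrite /= e2; field; rewrite lt0r_neq0.
    by rewrite Kb subrr mul0r.
  apply.
    by apply: divr_ge0; exact: ltW.
  by rewrite ler_pdivrMr // mul1r; lra.
Qed.
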